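(* Consider Setting A and suppose $\{\mathcal G[k]\}_{k\ge0}$ satisfies conditions (C1), (C2), (C3). Then there exist observer gains $L_1,\dots,L_N$ and a time $K\in\mathbb N$ such that, when all nodes run Algorithm 1, for every initial state $x[0]$ and all initial estimates, $\hat x_i[k]=x[k]$ for all $k\ge K$ and all $i\in\mathcal V$ (where $\hat x_i[k]=T\hat z_i[k]$).
   Context: Setting A. Consider the discrete-time LTI system $x[k+1]=Ax[k]$, $k\in\mathbb N$, with $A\in\mathbb R^{n\times n}$, monitored by $N$ nodes $\mathcal V=\{1,\dots,N\}$; node $i$ measures $y_i[k]=C_ix[k]$ with $C_i\in\mathbb R^{r_i\times n}$. Let $C=[C_1^T\ \cdots\ C_N^T]^T$ and assume $(A,C)$ is observable. Fix an invertible $T$ such that $\bar A=T^{-1}AT$ is block lower-triangular with diagonal blocks $A_{11},\dots,A_{NN}$ and off-diagonal blocks $A_{jq}$ ($q<j$), zero blocks above the diagonal, and $C_iT=[C_{i1}\ \cdots\ C_{ii}\ 0\ \cdots\ 0]$ for each $i$, with $(A_{jj},C_{jj})$ observable for every $j$ (such $T$ exists). With $z[k]=T^{-1}x[k]$ partitioned compatibly into sub-states $z^{(1)}[k],\dots,z^{(N)}[k]$, one has $z^{(j)}[k+1]=A_{jj}z^{(j)}[k]+\sum_{q=1}^{j-1}A_{jq}z^{(q)}[k]$ and $y_j[k]=\sum_{q=1}^{j}C_{jq}z^{(q)}[k]$. Node $j$ is called the source node of sub-state $j$. Communication: at each time $k$ there is a directed graph $\mathcal G[k]=(\mathcal V,\mathcal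 E[k])$; $(l,i)\in\mathcal E[k]$ means $l$ can send to $i$ at time $k$; $\mathcal N_i[k]=\{l\neq i:(l,i)\in\mathcal E[k]\}$. The union graph over $[k_1,k_2]$ has vertex set $\mathcal V$ and edge set $\bigcup_{\tau=k_1}^{k_2}\mathcal E[\tau]$. Algorithm 1 (run for every sub-state $j$ simultaneously). Each node $i$ keeps an estimate $\hat z^{(j)}_i[k]$ (arbitrary initial value) and a freshness index $\tau^{(j)}_i[k]\in\mathbb N\cup\{\omega\}$, where $\omega$ is a special symbol; initially $\tau^{(j)}_j[0]=0$ and $\tau^{(j)}_i[0]=\omega$ for $i\ne j$. Source node $j$: $\tau^{(j)}_j[k]=0$ for all $k$, and $\hat z^{(j)}_j[k+1]=(A_{jj}-L_jC_{jj})\hat z^{(j)}_j[k]+\sum_{q=1}^{j-1}(A_{jq}-L_jC_{jq})\hat z^{(q)}_j[k]+L_jy_j[k]$, where $L_j$ is an observer gain. Non-source node $i\neq j$ at time $k$: let $\mathcal M^{(j)}_i[k]=\{l\in\mathcal N_i[k]:\tau^{(j)}_l[k]\neq\omega\}$; if $\tau^{(j)}_i[k]=\omega$ let $\mathcal F^{(j)}_i[k]=\mathcal M^{(j)}_i[k]$, otherwise $\mathcal F^{(j)}_i[k]=\{l\in\mathcal M^{(j)}_i[k]:\tau^{(j)}_l[k]<\tau^{(j)}_i[k]\}$. If $\mathcal F^{(j)}_i[k]\ne\emptyset$, pick $u\in\arg\min_{l\in\mathcal F^{(j)}_i[k]}\tau^{(j)}_l[k]$ and set $\tau^{(j)}_i[k+1]=\tau^{(j)}_u[k]+1$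 and $\hat z^{(j)}_i[k+1]=A_{jj}\hat z^{(j)}_u[k]+\sum_{q=1}^{j-1}A_{jq}\hat z^{(q)}_i[k]$ (''$i$ adopts the information of $u$ at time $k$''). If $\mathcal F^{(j)}_i[k]=\emptyset$, set $\tau^{(j)}_i[k+1]=\omega$ if $\tau^{(j)}_i[k]=\omega$ and $\tau^{(j)}_i[k+1]=\tau^{(j)}_i[k]+1$ otherwise, and $\hat z^{(j)}_i[k+1]=A_{jj}\hat z^{(j)}_i[k]+\sum_{q=1}^{j-1}A_{jq}\hat z^{(q)}_i[k]$ (''$i$ adopts its own information''). Conditions on the graph sequence: there is an increasing sequence $\mathbb I=\{t_0,t_1,\dots\}\subset\mathbb N$ with $t_0=0$ such that, with $f(t_q)=t_{q+1}-t_q$: (C1) $f(t_q)$ is non-decreasing in $q$; (C2) with $m(k)=\max\{t_q\in\mathbb I:t_q\le k\}$ and $g(k)=f(m(k))$, one has $\limsup_{k\to\infty}\frac{2(N-1)g(k)}{k}=\delta<1$; (C3) for each $q$, the union graph over $[t_q,t_{q+1}-1]$ is strongly connected. *)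

(* Defs.v *)
From HB Require Import structures.
From mathcomp Require Import all_boot all_order all_algebra.
Set Implicit Arguments.
Unset Strict Implicit.
Unset Printing Implicit Defensive.
Import Order.TTheory GRing.Theory Num.Theory.

(* Union graph over [k1, k2]: edge (a,b) present iff it is present at some
   time tau with k1 <= tau <= k2.  E k l i means "l can send to i at time k". *)
Definition union_rel (N : nat) (E : nat -> rel 'I_N) (k1 k2 : nat) : rel 'I_N :=
  fun a b => has (fun s => E s a b) (index_iota k1 k2.+1).

Definition strongly_connected (N : nat) (e : rel 'I_N) : Prop :=
  forall a b : 'I_N, connect e a b.

(* index q of m(k) = max { t_q in I : t_q <= k } *)
Definition idx (t : nat -> nat) (k : nat) : nat := \max_(q < k.+1 | t q <= k) q.

(* g(k) = f(m(k)) with f(t_q) = t_{q+1} - t_q *)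
Definition gfun (t : nat -> nat) (k : nat) : nat := t (idx t k).+1 - t (idx t k).

(* I = {t_0 < t_1 < ...}, t_0 = 0, and conditions (C1), (C2), (C3).
   (C2) "limsup 2(N-1)g(k)/k = delta < 1" is stated as: there is a rational
   a/b < 1 bounding the ratio for all large k (equivalent to limsup < 1). *)
Definition graph_conditions (N : nat) (E : nat -> rel 'I_N) (t : nat -> nat) : Prop :=
  [/\ t 0 = 0,
      (forall q, t q < t q.+1),
      (forall q, t q.+1 - t q <= t q.+2 - t q.+1),
      (exists a b k0 : nat, a < b /\
          forall k, k0 <= k -> b * (2 * (N - 1) * gfun t k) <= a * k)
    & (forall q, strongly_connected (union_rel E (t q) (t q.+1).-1))].

(* ---------- freshness indices: None encodes omega *)
Definition fresh_lt (a b : option nat) : bool :=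
  match a, b with Some x, Some y => x < y | _, _ => false end.
Definition fresh_le (a b : option nat) : bool :=
  match a, b with Some x, Some y => x <= y | _, _ => false end.

Definition in_F (N : nat) (E : nat -> rel 'I_N)
    (tau : 'I_N -> 'I_N -> nat -> option nat) (i j : 'I_N) (k : nat) (l : 'I_N) : bool :=
  [&& l != i, E k l i, tau l j k != None &
      (if tau i j k is Some _ then fresh_lt (tau l j k) (tau i j k) else true)].

Local Open Scope ring_scope.

Definition observable (R : fieldType) (n p : nat)
    (A : 'M[R]_n) (C : 'M[R]_(p, n)) : bool :=
  \rank (\mxcol_(i < n) (C *m A ^+ i)) == n.

(* (zh, tau) is a run of Algorithm 1 (all sub-states j simultaneously), with
   true state x[k] = A^k x0, measurements y_j[k] = C_j x[k], gains L,
   graph sequence E.  zh i j k = \hat z^{(j)}_i[k]; tau i j k = tau^{(j)}_i[k].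
   Initial estimates zh _ _ 0 are unconstrained; ties in the argmin are
   resolved arbitrarily. *)
Definition run (R : realFieldType) (N : nat) (d r : 'I_N -> nat)
    (Ab : forall j q : 'I_N, 'M[R]_(d j, d q))
    (Cb : forall i q : 'I_N, 'M[R]_(r i, d q))
    (Cs : forall i : 'I_N, 'M[R]_(r i, \sum_(j < N) d j))
    (A : 'M[R]_(\sum_(j < N) d j))
    (L : forall j : 'I_N, 'M[R]_(d j, r j))
    (E : nat -> rel 'I_N)
    (x0 : 'cV[R]_(\sum_(j < N) d j))
    (zh : forall i j : 'I_N, nat -> 'cV[R]_(d j))
    (tau : 'I_N -> 'I_N -> nat -> option nat) : Prop :=
  [/\ (forall i j : 'I_N, i != j -> tau i j 0 = None),
      (forall (j : 'I_N) k, tau j j k = Some 0%N),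
      (forall (j : 'I_N) k,
          zh j j k.+1 =
            (Ab j j - L j *m Cb j j) *m zh j j k
            + \sum_(q < N | (q < j)%N) ((Ab j q - L j *m Cb j q) *m zh j q k)
            + L j *m (Cs j *m (A ^+ k *m x0)))
    & (forall (i j : 'I_N) k, i != j ->
         ((exists l, in_F E tau i j k l) ->
            exists u, [/\ in_F E tau i j k u,
                          (forall l, in_F E tau i j k l -> fresh_le (tau u j k) (tau l j k)),
                          tau i j k.+1 = omap S (tau u j k)
                        & zh i j k.+1 = Ab j j *m zh u j k
                            + \sum_(q < N | (q < j)%N) (Ab j q *m zh i q k)])
         /\
         ((forall l, ~~ in_F E tau i j k l) ->
            tau i j k.+1 = omap S (tau i j k) /\
            zh i j k.+1 = Ab j j *m zh i j k
                            + \sum_(q < N | (q < j)%N) (Ab j q *m zh i q k)))].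

(* Main.v *)
Require Import Defs.
From HB Require Import structures.
From mathcomp Require Import all_boot all_order all_algebra.
From mathcomp Require Import zify.
Set Implicit Arguments. Unset Strict Implicit. Unset Printing Implicit Defensive.
Import Order.TTheory GRing.Theory Num.Theory.
Local Open Scope ring_scope.
Section Deadbeat.
Variables (F : fieldType) (n p : nat) (A : 'M[F]_n) (C : 'M[F]_(p, n)).

Definition Usp k : 'M[F]_n := (\sum_(i < k) <<C *m A ^+ i>>)%MS.
Definition Vsp k : 'M[F]_n := kermx (A ^+ k *m cokermx (Usp k)).

Lemma memV k m (v : 'M_(m, n)) : (v <= Vsp k)%MS = (v *m A ^+ k <= Usp k)%MS.
Proof. by rewrite sub_kermx submxE mulmxA. Qed.

Lemma Usp0 : Usp 0 = 0.
Proof. by rewrite /Usp big_ord0. Qed.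

Lemma UspS k : Usp k.+1 = (Usp k + <<C *m A ^+ k>>)%MS.
Proof. by rewrite /Usp big_ord_recr. Qed.

Lemma memV0 m (v : 'M_(m, n)) : (v <= Vsp 0)%MS -> v = 0.
Proof. by rewrite memV Usp0 expr0 mulmx1 submx0 => /eqP. Qed.

Lemma UspA k : (Usp k *m A <= Usp k.+1)%MS.
Proof.
elim: k => [|k IH]; first by rewrite Usp0 mul0mx sub0mx.
rewrite UspS addsmxMr addsmx_sub; apply/andP; split.
  by apply: (submx_trans IH); rewrite [Usp k.+2]UspS addsmxSl.
rewrite (eqmxMr _ (genmxE _)) UspS -mulmxA mulmxE -exprSr. apply: submx_trans (addsmxSr _ _).
by rewrite genmxE.
Qed.

Lemma Vnest k : (Vsp k <= Vsp k.+1)%MS.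
Proof.
rewrite memV exprSr -mulmxE mulmxA. apply: submx_trans (UspA k). apply: submxMr.
by rewrite -memV.
Qed.

Lemma Vnest_le j k : (j <= k)%N -> (Vsp j <= Vsp k)%MS.
Proof.
move=> /subnK <-; elim: (k - j)%N => [|m IH] //=.
by rewrite addSn (submx_trans IH) // Vnest.
Qed.

Lemma Vflag k (v : 'rV_n) : (v <= Vsp k.+1)%MS -> (v *m A <= Vsp k + C)%MS.
Proof.
rewrite memV UspS => /sub_addsmxP [[u1 u2] /= Hv].
have : (u2 *m <<C *m A ^+ k>> <= C *m A ^+ k)%MS by apply: submx_trans (submxMl _ _) _; rewrite genmxE.
case/submxP => w Hw.
have H1 : (v *m A - w *m C <= Vsp k)%MS.
  have eA : A *m A ^+ k = A ^+ k.+1 by rewrite exprS mulmxE.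
  by rewrite memV mulmxBl -mulmxA eA Hv Hw -mulmxA addrK submxMl.
by rewrite -[v *m A](subrK (w *m C)) addmx_sub_adds // submxMl.
Qed.




Lemma Vfull : observable A C -> (1%:M <= Vsp n)%MS.
Proof.
rewrite /observable => /eqP Hr.
have sub : (\mxcol_(i < n) (C *m A ^+ i) <= Usp n)%MS.
  apply/row_subP => s; rewrite row_mxcol.
  apply: submx_trans (row_sub _ _) _.
  by apply: (sumsmx_sup (tagnat.sig1 s)) => //; rewrite genmxE.
have full : row_full (Usp n).
  rewrite /row_full eqn_leq rank_leq_col /= -{1}Hr; exact: mxrankS.
by rewrite memV mul1mx; apply: submx_trans (submx1 _) _; rewrite sub1mx.
Qed.

Definition Good (L : 'M[F]_(n, p)) k :=
  forall j, (j <= k)%N -> forall v : 'rV_n, (v <= Vsp j)%MS ->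
    (v *m (A - L *m C) <= Vsp j.-1)%MS.

Lemma Good_step L k : Good L k -> exists L', Good L' k.+1.
Proof.
move=> HL.
pose Pk : 'M[F]_n := 1%:M - proj_mx (Vsp k) (Vsp k)^C%MS.
pose G : 'M[F]_(n, p) := (A - L *m C) *m pinvmx (col_mx (Vsp k) C) *m col_mx 0 1%:M.
have eL : A - (L + Pk *m G) *m C = (A - L *m C) - Pk *m (G *m C).
  by rewrite mulmxDl mulmxA opprD addrA.
exists (L + Pk *m G) => j; rewrite eL; rewrite leq_eqVlt ltnS => /orP [/eqP -> | Hj] v Hv; last first.
  have Hv' : (v <= Vsp k)%MS by apply: submx_trans Hv (Vnest_le Hj).
  have vP : v *m Pk = 0.
    by rewrite /Pk mulmxBr mulmx1 proj_mx_id ?capmx_compl // subrr.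
  by rewrite mulmxBr !mulmxA vP !mul0mx subr0 HL.
rewrite /=.
set u := v *m Pk.
have Hpr : (v *m proj_mx (Vsp k) (Vsp k)^C%MS <= Vsp k)%MS by exact: proj_mx_sub.
have Hu : (u <= Vsp k.+1)%MS.
  rewrite /u /Pk mulmxBr mulmx1 addmx_sub // eqmx_opp.
  exact: submx_trans Hpr (Vnest k).
have Hy : (u *m (A - L *m C) <= col_mx (Vsp k) C)%MS.
  rewrite -addsmxE mulmxBr; apply: addmx_sub; first exact: Vflag.
  by rewrite eqmx_opp mulmxA; apply: submx_trans (submxMl _ _) (addsmxSr _ _).
set c := u *m (A - L *m C) *m pinvmx (col_mx (Vsp k) C).
have Hc : u *m (A - L *m C) = lsubmx c *m Vsp k + rsubmx c *m C.
  by rewrite -mul_row_col hsubmxK /c mulmxKpV.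
have HuG : u *m G = rsubmx c.
  have -> : u *m G = c *m col_mx 0 1%:M by rewrite /G /c !mulmxA.
  by rewrite -{1}[c]hsubmxK mul_row_col mulmx0 add0r mulmx1.
have -> : v *m ((A - L *m C) - Pk *m (G *m C)) =
   (u *m (A - L *m C) - u *m G *m C) + (v - u) *m (A - L *m C).
  have gen : forall (P X : 'M_n) (G0 : 'M_(n, p)),
      v *m (X - P *m (G0 *m C)) = (v *m P *m X - v *m P *m G0 *m C) + (v - v *m P) *m X.
    by move=> P X G0; rewrite mulmxBl [RHS]addrC addrA subrK mulmxBr !mulmxA.
  exact: gen.
rewrite addmx_sub //.
  by rewrite Hc HuG addrK submxMl.
have -> : v - u = v *m proj_mx (Vsp k) (Vsp k)^C%MS.
  by rewrite /u /Pk mulmxBr mulmx1 opprB addrC subrK.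
apply: submx_trans (HL k (leqnn k) _ Hpr) _.
exact: Vnest_le (leq_pred k).
Qed.

Lemma Good_all k : exists L, Good L k.
Proof.
elim: k => [|k [L HL]]; last exact: Good_step HL.
exists 0 => j; rewrite leqn0 => /eqP -> v /memV0 ->; by rewrite mul0mx sub0mx.
Qed.

Lemma deadbeat : observable A C -> exists L : 'M[F]_(n, p), (A - L *m C) ^+ n = 0.
Proof.
move=> Hobs; have [L HL] := Good_all n; exists L.
have key : forall m, (m <= n)%N -> forall v : 'rV_n, (v <= Vsp m)%MS ->
    v *m (A - L *m C) ^+ m = 0.
  elim=> [|m IH] Hm v Hv; first by rewrite (memV0 Hv) mul0mx.
  rewrite exprS -mulmxE mulmxA; apply: IH; first exact: ltnW.
  exact: (HL m.+1 Hm v Hv).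
apply/row_matrixP => i; rewrite row0 -[X in row i X]mul1mx row_mul.
apply: key => //; apply: submx_trans (row_sub _ _) (Vfull Hobs).
Qed.

End Deadbeat.

Lemma zmod_id (V : zmodType) (a b c d e : V) :
  a + (b - c) + (d + c) - (e + b) = a - (e - d).
Proof.
rewrite (addrC d c) !addrA subrK opprD addrA opprB.
by rewrite addrAC (addrAC a b d) addrK addrA.
Qed.

Lemma split_lower (V : nmodType) (N : nat) (F : 'I_N -> V) (j : 'I_N) :
  (forall q : 'I_N, (j < q)%N -> F q = 0) ->
  \sum_(q < N) F q = F j + \sum_(q < N | (q < j)%N) F q.
Proof.
move=> H0; rewrite (bigD1 j) //=; congr (_ + _).
rewrite (bigID (fun q : 'I_N => (q < j)%N)) /= [X in _ + X]big1 ?addr0.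
  apply: eq_bigl => q; case: (ltnP q j) => Hq; rewrite ?andbF ?andbT //.
  by apply/eqP => Eq; rewrite Eq ltnn in Hq.
move=> q /andP [Hq Hl]; apply: H0; rewrite -leqNgt in Hl.
rewrite ltn_neqAle Hl andbT; apply: contra Hq => /eqP Hv; apply/eqP; exact: val_inj.
Qed.


Fixpoint Kn (t : nat -> nat) (N D : nat) (m : nat) : nat :=
  match m with 0 => 0%N | m'.+1 => t ((Kn t N D m' + D) + N.-1)%N end.

Section Main.
Variables (R : realFieldType) (N : nat) (d r : 'I_N -> nat)
    (Ab : forall j q : 'I_N, 'M[R]_(d j, d q))
    (Cb : forall i q : 'I_N, 'M[R]_(r i, d q))
    (Cs : forall i : 'I_N, 'M[R]_(r i, \sum_(j < N) d j))
    (A : 'M[R]_(\sum_(j < N) d j))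
    (L : forall j : 'I_N, 'M[R]_(d j, r j))
    (E : nat -> rel 'I_N)
    (x0 : 'cV[R]_(\sum_(j < N) d j))
    (zh : forall i j : 'I_N, nat -> 'cV[R]_(d j))
    (tau : 'I_N -> 'I_N -> nat -> option nat).
Variables (T : 'M[R]_(\sum_(j < N) d j)).
Hypothesis Hrun : run Ab Cb Cs A L E x0 zh tau.
Hypothesis HTunit : T \in unitmx.
Hypothesis Hblk : invmx T *m A *m T = \mxblock_(j < N, q < N) Ab j q.
Hypothesis HAb : forall j q : 'I_N, (j < q)%N -> Ab j q = 0.
Hypothesis HCs : forall i : 'I_N, Cs i *m T = \mxrow_(q < N) Cb i q.
Hypothesis HCb : forall i q : 'I_N, (i < q)%N -> Cb i q = 0.
Hypothesis Hnil : forall j : 'I_N, (Ab j j - L j *m Cb j j) ^+ d j = 0.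

Definition hasb (j i : 'I_N) k X : bool :=
  if tau i j k is Some s then (X + s <= k)%N else false.

Lemma hasb_mono j i k X : hasb j i k X -> hasb j i k.+1 X.
Proof.
case: Hrun => _ Hsrc _ Hstep.
rewrite /hasb; case: (eqVneq i j) => [->|ne]; first by rewrite !Hsrc addn0 => /leqW.
case Hti: (tau i j k) => [s|] // Hs.
have [H1 H2] := Hstep i j k ne.
case: (boolP [exists l, in_F E tau i j k l]) => [/existsP [l Hl]|/existsPn Hn].
  have [u [Hu Hmin -> _]] := H1 (ex_intro _ l Hl).
  move: Hu; rewrite /in_F Hti => /and4P [_ _ _].
  by case: (tau u j k) => [su|] //= Hsu; rewrite addnS ltnS (leq_trans _ Hs) // leq_add2l ltnW.
have [-> _] := H2 Hn; by rewrite Hti /= addnS ltnS.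
Qed.

Lemma hasb_monoL j i k k' X : (k <= k')%N -> hasb j i k X -> hasb j i k' X.
Proof.
move=> /subnK <-; elim: (k' - k)%N => [|m IH] //= H.
by rewrite addSn; apply: hasb_mono; apply: IH.
Qed.

Lemma hasb_spread j a b k X : a != b -> E k a b -> hasb j a k X -> hasb j b k.+1 X.
Proof.
move=> ab Eab Ha.
case: (boolP (hasb j b k X)) => [Hb|Hb]; first exact: hasb_mono.
case: Hrun => _ Hsrc _ Hstep.
move: Ha Hb; rewrite /hasb; case Hta: (tau a j k) => [sa|] // Hsa.
case: (eqVneq b j) => [->|ne]; first by rewrite !Hsrc addn0 => _; exact: leq_trans (leq_addr _ _) (leqW Hsa).
have [H1 _] := Hstep b j k ne.
move=> Hb.
have Ha_in : in_F E tau b j k a.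
  rewrite /in_F ab Eab Hta /=.
  move: Hb; case: (tau b j k) => [sb|] //= Hsb.
  by rewrite -(ltn_add2l X) (leq_ltn_trans Hsa) // ltnNge.
have [u [Hu Hmin -> _]] := H1 (ex_intro _ a Ha_in).
have := Hmin a Ha_in; rewrite Hta /fresh_le.
case: (tau u j k) => [su|] //= Hsu.
by rewrite addnS ltnS (leq_trans _ Hsa) // leq_add2l.
Qed.

Lemma hasb_src j k X : (X <= k)%N -> hasb j j k X.
Proof. by case: Hrun => _ Hsrc _ _ HX; rewrite /hasb Hsrc addn0. Qed.

Lemma connect_exit (T0 : finType) (e : rel T0) (P : pred T0) x y :
  connect e x y -> P x -> ~~ P y -> exists a b, [/\ e a b, P a & ~~ P b].
Proof.
case/connectP => p; elim: p x => [|z p IH] x /=; first by move=> _ -> ->.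
move=> /andP [exz pz] Hy Px; case: (boolP (P z)) => Pz.
  exact: IH pz Hy Pz.
by exists x, z.
Qed.

Definition Sset j k X := [set i | hasb j i k X].

Lemma Sset_sub j k k' X : (k <= k')%N -> Sset j k X \subset Sset j k' X.
Proof. by move=> kk'; apply/subsetP => i; rewrite !inE; apply: hasb_monoL. Qed.

Lemma step_interval (t : nat -> nat) j q X : (X <= t q)%N -> (t q < t q.+1)%N ->
  strongly_connected (union_rel E (t q) (t q.+1).-1) ->
  Sset j (t q) X = setT \/ (#|Sset j (t q) X| < #|Sset j (t q.+1) X|)%N.
Proof.
move=> HX Ht Hsc.
case: (boolP [forall b, b \in Sset j (t q) X]) => [/forallP Hall|/forallPn [b Hb]].
  by left; apply/setP => b; rewrite [RHS]inE Hall.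
right; apply: proper_card; apply/properP; split; first by apply: Sset_sub; exact: ltnW.
have Hj : j \in Sset j (t q) X by rewrite inE hasb_src.
have [a [b' [Eab Ha Hb']]] := connect_exit (Hsc j b) Hj Hb.
exists b'; last by [].
move: Eab; rewrite /union_rel => /hasP [s]; rewrite mem_index_iota => /andP [s1 s2] Es.
have ab : a != b' by apply: contraNneq Hb' => <-.
rewrite inE; apply: (@hasb_monoL _ _ s.+1).
  by move: s2; rewrite prednK // (leq_ltn_trans (leq0n _) Ht).
apply: hasb_spread ab Es _; apply: hasb_monoL s1 _.
have Ha2 : a \in Sset j (t q) X := Ha. by rewrite inE in Ha2.
Qed.

Lemma t_mono (t : nat -> nat) : (forall q, (t q < t q.+1)%N) ->
  forall m n, (m <= n)%N -> (t m <= t n)%N.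
Proof.
move=> Ht m n /subnK <-; elim: (n - m)%N => [|k IH] //=.
by rewrite addSn (leq_trans IH) // ltnW.
Qed.

Lemma t_ge (t : nat -> nat) : t 0 = 0%N -> (forall q, (t q < t q.+1)%N) ->
  forall q, (q <= t q)%N.
Proof. by move=> t0 Ht; elim=> [|q IH] //; exact: leq_ltn_trans IH (Ht q). Qed.

Lemma grow (t : nat -> nat) j q X : (X <= t q)%N -> (forall q, (t q < t q.+1)%N) ->
  (forall q, strongly_connected (union_rel E (t q) (t q.+1).-1)) ->
  forall m, (minn N m.+1 <= #|Sset j (t (q + m)) X|)%N.
Proof.
move=> HX Ht Hsc; elim=> [|m IH].
  rewrite addn0; have Hj : j \in Sset j (t q) X by rewrite inE hasb_src.
  by rewrite (leq_trans (geq_minr _ _)) // card_gt0; apply/set0Pn; exists j.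
have HXm : (X <= t (q + m))%N by rewrite (leq_trans HX) // (t_mono Ht) // leq_addr.
have := step_interval j HXm (Ht _) (Hsc _); rewrite addnS.
case=> [HT | Hlt].
  have : Sset j (t (q + m)) X \subset Sset j (t (q + m).+1) X by apply: Sset_sub; exact: ltnW.
  rewrite HT => /subset_leq_card; rewrite cardsT card_ord => HN.
  by rewrite (leq_trans (geq_minl _ _)).
apply: leq_trans Hlt; move: IH; move: (#|_|) => c; lia.
Qed.

Lemma all_fresh (t : nat -> nat) j q X : t 0 = 0%N -> (X <= t q)%N -> (forall q, (t q < t q.+1)%N) ->
  (forall q, strongly_connected (union_rel E (t q) (t q.+1).-1)) ->
  forall k i, (t (q + N.-1) <= k)%N -> hasb j i k X.
Proof.
move=> t0 HX Ht Hsc k i Hk.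
have N0 : (0 < N)%N by case: N j {i} => [[]|].
have := grow j HX Ht Hsc N.-1; rewrite prednK // minnn => Hc.
have HT : Sset j (t (q + N.-1)) X = setT.
  apply/eqP; rewrite eqEcard subsetT cardsT card_ord Hc //.
have : i \in Sset j (t (q + N.-1)) X by rewrite HT inE.
rewrite inE; exact: hasb_monoL.
Qed.


Definition zz k := invmx T *m (A ^+ k *m x0).
Definition zc (q : 'I_N) k : 'cV[R]_(d q) := submxcol (zz k) q.

Lemma zz_col k : zz k = \mxcol_q zc q k.
Proof. by rewrite submxcolK. Qed.

Lemma T_zz k : T *m zz k = A ^+ k *m x0.
Proof. by rewrite /zz mulKVmx. Qed.

Lemma Z1 (j : 'I_N) k :
  zc j k.+1 = Ab j j *m zc j k + \sum_(q < N | (q < j)%N) (Ab j q *m zc q k).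
Proof.
rewrite [LHS]/zc.
have -> : zz k.+1 = (invmx T *m A *m T) *m zz k.
  by rewrite -!mulmxA T_zz /zz exprS -mulmxE !mulmxA.
rewrite Hblk zz_col mul_mxblock_mxrow mxcolK.
apply: split_lower => q Hq; by rewrite HAb // mul0mx.
Qed.

Lemma Z2 (j : 'I_N) k :
  Cs j *m (A ^+ k *m x0) = Cb j j *m zc j k + \sum_(q < N | (q < j)%N) (Cb j q *m zc q k).
Proof.
rewrite -T_zz mulmxA HCs zz_col mul_mxrow_mxcol.
apply: split_lower => q Hq; by rewrite HCb // mul0mx.
Qed.


Definition earlier_ok (j : 'I_N) K' := forall q : 'I_N, (q < j)%N ->
  forall i k, (K' <= k)%N -> zh i q k = zc q k.

Lemma src_step j K' k : earlier_ok j K' -> (K' <= k)%N ->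
  zh j j k.+1 - zc j k.+1 = (Ab j j - L j *m Cb j j) *m (zh j j k - zc j k).
Proof.
move=> Hear Hk; case: Hrun => _ _ Hsrc _.
rewrite Hsrc Z1 Z2.
have -> : \sum_(q < N | (q < j)%N) ((Ab j q - L j *m Cb j q) *m zh j q k) =
    \sum_(q < N | (q < j)%N) (Ab j q *m zc q k) - L j *m \sum_(q < N | (q < j)%N) (Cb j q *m zc q k).
  rewrite mulmx_sumr -sumrB; apply: eq_bigr => q Hq.
  by rewrite (Hear q Hq j k Hk) mulmxBl mulmxA.
rewrite mulmxDr zmod_id mulmxBr; congr (_ - _).
by rewrite mulmxBl -mulmxA.

Qed.

Lemma src_zero j K' : earlier_ok j K' -> forall k, (K' + d j <= k)%N -> zh j j k = zc j k.
Proof.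
move=> Hear.
have pw : forall s, zh j j (K' + s) - zc j (K' + s) =
    (Ab j j - L j *m Cb j j) ^+ s *m (zh j j K' - zc j K').
  elim=> [|s IH]; first by rewrite addn0 expr0 mul1mx.
  rewrite addnS (src_step Hear (leq_addr _ _)) IH mulmxA exprS mulmxE //.
move=> k /subnK <-; apply/eqP; rewrite -subr_eq0; apply/eqP.
by rewrite addnC -addnA pw exprD Hnil mul0r mul0mx.
Qed.

Lemma copy_step j i u k K' : earlier_ok j K' -> (K' <= k)%N -> zh u j k = zc j k ->
  Ab j j *m zh u j k + \sum_(q < N | (q < j)%N) (Ab j q *m zh i q k) = zc j k.+1.
Proof.
move=> Hear Hk Hu; rewrite Z1 Hu; congr (_ + _); apply: eq_bigr => q Hq.
by rewrite (Hear q Hq i k Hk).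
Qed.

Lemma inv_zero j K : earlier_ok j K -> (forall k, (K <= k)%N -> zh j j k = zc j k) ->
  forall k i s, tau i j k = Some s -> (K + s <= k)%N -> zh i j k = zc j k.
Proof.
move=> Hear Hsz; case: Hrun => Hinit Hsrc _ Hstep.
elim=> [|k IH] i s.
  case: (eqVneq i j) => [->|ne]; last by rewrite Hinit.
  by move=> _ Hs; apply: Hsz; rewrite (leq_trans (leq_addr _ _) Hs).
case: (eqVneq i j) => [->|ne].
  by move=> _ Hs; apply: Hsz; rewrite (leq_trans (leq_addr _ _) Hs).
have [H1 H2] := Hstep i j k ne.
case: (boolP [exists l, in_F E tau i j k l]) => [/existsP [l Hl]|/existsPn Hn].
  have [u [_ _ -> ->]] := H1 (ex_intro _ l Hl).
  case Htu: (tau u j k) => [su|] //= [<-] Hs.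
  have Hk : (K <= k)%N by rewrite (leq_trans (leq_addr su _)) // -ltnS -addnS.
  apply: (copy_step i Hear Hk); apply: (IH u su Htu).
  by rewrite -ltnS -addnS.
have [-> ->] := H2 Hn.
case Hti: (tau i j k) => [si|] //= [<-] Hs.
have Hk : (K <= k)%N by rewrite (leq_trans (leq_addr si _)) // -ltnS -addnS.
apply: (copy_step i Hear Hk); apply: (IH i si Hti).
by rewrite -ltnS -addnS.
Qed.

Lemma earlier_ok_mono j K1 K2 : (K1 <= K2)%N -> earlier_ok j K1 -> earlier_ok j K2.
Proof. by move=> H12 H q Hq i k Hk; apply: H => //; exact: leq_trans Hk. Qed.

Lemma all_zero (t : nat -> nat) : t 0 = 0%N -> (forall q, (t q < t q.+1)%N) ->
  (forall q, strongly_connected (union_rel E (t q) (t q.+1).-1)) ->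
  forall m (q : 'I_N), (q < m)%N -> forall i k,
    (Kn t N (\max_(j < N) d j) m <= k)%N -> zh i q k = zc q k.
Proof.
move=> Ht0 Htinc Hsc; set D := \max_(j < N) d j.
elim=> [|m IH] q //= Hq i k Hk.
have Hmono : (Kn t N D m <= t (Kn t N D m + D + N.-1))%N.
  by rewrite (leq_trans _ (t_ge Ht0 Htinc _)) // -addnA leq_addr.
case: (ltnP q m) => Hqm.
  by apply: IH => //; exact: leq_trans Hmono Hk.
have Hqv : val q = m by apply/eqP; rewrite eqn_leq Hqm -ltnS Hq.
have Hear : earlier_ok q (Kn t N D m).
  by move=> q' Hq' i' k' Hk'; apply: IH => //; rewrite -Hqv.
set K2 := (Kn t N D m + D)%N.
have Hear2 : earlier_ok q K2 by apply: earlier_ok_mono Hear; exact: leq_addr.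
have Hsz : forall k, (K2 <= k)%N -> zh q q k = zc q k.
  move=> k' Hk'; apply: (src_zero Hear); apply: leq_trans Hk'.
  by rewrite leq_add2l /D (leq_bigmax q).
have HX : (K2 <= t K2)%N by exact: t_ge.
have := all_fresh q Ht0 HX Htinc Hsc i Hk; rewrite /hasb.
case Hti: (tau i q k) => [s|] // Hs.
exact: (inv_zero Hear2 Hsz Hti Hs).
Qed.

Lemma final (t : nat -> nat) : t 0 = 0%N -> (forall q, (t q < t q.+1)%N) ->
  (forall q, strongly_connected (union_rel E (t q) (t q.+1).-1)) ->
  forall k (i : 'I_N), (Kn t N (\max_(j < N) d j) N <= k)%N ->
  T *m (\mxcol_(j < N) zh i j k) = A ^+ k *m x0.
Proof.
move=> Ht0 Htinc Hsc k i Hk; rewrite -T_zz zz_col; congr (T *m _).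
by apply: eq_mxcol => j; apply: (all_zero Ht0 Htinc Hsc (ltn_ord j)).
Qed.

End Main.

Unset Implicit Arguments.
Set Strict Implicit.

Theorem proposition1 (R : realFieldType) (N : nat) (d r : 'I_N -> nat)
    (A : 'M[R]_(\sum_(j < N) d j))
    (Cs : forall i : 'I_N, 'M[R]_(r i, \sum_(j < N) d j))
    (T : 'M[R]_(\sum_(j < N) d j))
    (Ab : forall j q : 'I_N, 'M[R]_(d j, d q))
    (Cb : forall i q : 'I_N, 'M[R]_(r i, d q))
    (E : nat -> rel 'I_N) (t : nat -> nat) :
  observable A (\mxcol_(i < N) Cs i) ->
  T \in unitmx ->
  invmx T *m A *m T = \mxblock_(j < N, q < N) Ab j q ->
  (forall j q : 'I_N, (j < q)%N -> Ab j q = 0) ->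
  (forall i : 'I_N, Cs i *m T = \mxrow_(q < N) Cb i q) ->
  (forall i q : 'I_N, (i < q)%N -> Cb i q = 0) ->
  (forall j : 'I_N, observable (Ab j j) (Cb j j)) ->
  graph_conditions E t ->
  exists (L : forall j : 'I_N, 'M[R]_(d j, r j)) (K : nat),
    forall (x0 : 'cV[R]_(\sum_(j < N) d j))
           (zh : forall i j : 'I_N, nat -> 'cV[R]_(d j))
           (tau : 'I_N -> 'I_N -> nat -> option nat),
      run Ab Cb Cs A L E x0 zh tau ->
      forall (k : nat) (i : 'I_N), (K <= k)%N ->
        T *m (\mxcol_(j < N) zh i j k) = A ^+ k *m x0.
Proof.
move=> _ HT Hblk HAb HCs HCb Hobs [Ht0 Htinc _ _ Hsc].
have exL : forall j : 'I_N, exists L : 'M[R]_(d j, r j),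
    (Ab j j - L *m Cb j j) ^+ d j == 0.
  move=> j; have [L HL] := deadbeat (Hobs j); by exists L; rewrite HL.
exists (fun j => xchoose (exL j)), (Kn t N (\max_(j < N) d j) N).
move=> x0 zh tau Hrun k i Hk.
apply: (final Hrun HT Hblk HAb HCs HCb _ Ht0 Htinc Hsc i Hk).
by move=> j; apply/eqP; exact: (xchooseP (exL j)).
Qed.
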